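(* Let $X$ be a finite $T_0$-space and let $x_i\in X$ be a beat point (up or down). Then $\det(X_M)=-\det\big((X\setminus\{x_i\})_M\big)$.
   Context: A finite $T_0$-space is identified with a finite poset via $x\le y$ iff $U_x\subseteq U_y$, where $U_x$ is the minimal open set containing $x$; subspaces carry the induced order. For a labelling $X=\{x_1,\dots,x_n\}$, $X_M=(x_{i,j})$ is the $n\times n$ matrix with $x_{i,j}=0$ if $x_i\le x_j$ and $x_{i,j}=1$ otherwise; its determinant does not depend on the labelling. A point $x$ is a down beat point if $\{y: y<x\}$ has a maximum, and an up beat point if $\{y:y>x\}$ has a minimum. *)

(* Defs.v *)
From HB Require Import structures.
From mathcomp Require Import all_boot all_order all_algebra.
Set Implicit Arguments. Unset Strict Implicit. Unset Printing Implicit Defensive.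
Import Order.TTheory GRing.Theory Num.Theory.
Local Open Scope order_scope.

(* A finite T0-space is identified with a finite poset T (a finPOrderType).
   A subspace A : {set T} carries the induced order. *)
Definition posMx (d : Order.disp_t) (T : finPOrderType d) (A : {set T})
  : 'M[int]_#|A| :=
  \matrix_(i < #|A|, j < #|A|)
     (if (enum_val i <= enum_val j)%O then 0%R else 1%R).

Definition down_beat (d : Order.disp_t) (T : finPOrderType d) (A : {set T}) (x : T) :=
  exists2 m, m \in A & (m < x) /\ (forall y, y \in A -> y < x -> y <= m).

Definition up_beat (d : Order.disp_t) (T : finPOrderType d) (A : {set T}) (x : T) :=
  exists2 m, m \in A & (x < m) /\ (forall y, y \in A -> x < y -> m <= y).

Definition beat_point (d : Order.disp_t) (T : finPOrderType d) (x : T) :=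
  down_beat [set: T] x \/ up_beat [set: T] x.

(* Main.v *)
Require Import Defs.
From mathcomp Require Import all_boot all_order all_fingroup all_algebra.
Import GRing.Theory.
Local Open Scope ring_scope.

Section Aux.
Import Order.POrderTheory.

Definition Mg (d : Order.disp_t) (T : finPOrderType d) k (g : 'I_k -> T)
  : 'M[int]_k :=
  \matrix_(i < k, j < k) (if (g i <= g j)%O then 0%R else 1%R).

Arguments Mg {d T k}.

Lemma relabel (d : Order.disp_t) (T : finPOrderType d) k (g f : 'I_k -> T) :
  bijective g -> injective f -> \det (Mg g) = \det (Mg f).
Proof.
case=> gi gK Kg finj.
have sinj : injective (gi \o f).
  by move=> a b /= /(congr1 g); rewrite !Kg => /finj.
pose s : 'S_k := perm sinj.
have -> : Mg f = row_perm s (col_perm s (Mg g)).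
  by apply/matrixP => i j; rewrite !mxE !permE /= !Kg.
rewrite row_permE col_permE !det_mulmx !det_perm odd_permV.
by rewrite mulrCA -signr_addb addbb expr0 mulr1.
Qed.

Lemma det_row_beat n (A : 'M[int]_n.+1) (r : 'I_n) :
  (forall j, A 0 j = A (lift 0 r) j - (j == 0)%:R) ->
  \det A = - \det (row' 0 (col' 0 A)).
Proof.
move=> hA.
pose B : 'M[int]_n.+1 := \matrix_(i, j) if i == 0 then A (lift 0 r) j else A i j.
pose C : 'M[int]_n.+1 := \matrix_(i, j) if i == 0 then (j == 0)%:R else A i j.
rewrite (@determinant_multilinear _ _ A B C 0 1 (-1)).
- rewrite (@determinant_alternate _ _ B 0 (lift 0 r)); last first.
    by move=> j; rewrite !mxE eqxx eq_sym (negbTE (neq_lift _ _)).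
    exact: neq_lift.
  rewrite mulr0 add0r mulN1r (expand_det_row C 0) (bigD1 0) //= big1.
    rewrite addr0 !mxE eqxx mul1r /cofactor addn0 expr0 mul1r.
    congr (- \det _); apply/matrixP => i j.
    by rewrite !mxE eq_sym (negbTE (neq_lift _ _)).
  by move=> j /negbTE hj; rewrite !mxE eqxx hj mul0r.
- apply/rowP => j; by rewrite !mxE !eqxx hA mul1r mulN1r.
- by apply/matrixP => i j; rewrite !mxE eq_sym (negbTE (neq_lift _ _)).
- by apply/matrixP => i j; rewrite !mxE eq_sym (negbTE (neq_lift _ _)).
Qed.

Lemma det_col_beat n (A : 'M[int]_n.+1) (r : 'I_n) :
  (forall i, A i 0 = A i (lift 0 r) - (i == 0)%:R) ->
  \det A = - \det (row' 0 (col' 0 A)).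
Proof.
move=> hA; rewrite -det_tr (@det_row_beat _ _ r).
  by rewrite -det_tr; congr (- \det _); apply/matrixP => i j; rewrite !mxE.
by move=> j; rewrite !mxE hA.
Qed.

End Aux.
Arguments Mg {d T k}.

Import Order.POrderTheory.
Theorem mainTheorem3 (d : Order.disp_t) (T : finPOrderType d) (x : T) :
  beat_point x ->
  \det (posMx [set: T]) = - \det (posMx [set~ x]).
Proof.
move=> hb.
pose n := #|[set~ x]|.
have cardT : #|T| = n.+1.
  rewrite /n cardsC1 prednK //; apply/card_gt0P; by exists x.
pose f (i : 'I_n.+1) : T :=
  if unlift 0 i is Some j then enum_val (j : 'I_#|[set~ x]|) else x.
have f0 : f 0 = x by rewrite /f unlift_none.
have fl : forall j, f (lift 0 j) = enum_val (j : 'I_#|[set~ x]|).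
  by move=> j; rewrite /f liftK.
have fx : forall j, enum_val (j : 'I_#|[set~ x]|) != x.
  by move=> j; have := enum_valP j; rewrite !inE.
have finj : injective f.
  move=> a b; case: (unliftP 0 a) => [a'|] ->; case: (unliftP 0 b) => [b'|] ->;
    rewrite ?f0 ?fl //.
  - by move/enum_val_inj ->.
  - by move=> e; move: (fx a'); rewrite e eqxx.
  - by move=> e; move: (fx b'); rewrite -e eqxx.
have minor : row' 0 (col' 0 (Mg f)) = posMx [set~ x].
  by apply/matrixP => i j; rewrite !mxE !fl.
suff H : forall k (g : 'I_k -> T), bijective g ->
    \det (Mg g) = - \det (posMx [set~ x]).
  apply: (H _ enum_val).
  apply: inj_card_bij; first exact: enum_val_inj.
  by rewrite card_ord cardsT.
move=> k g bg.
have ek : k = n.+1 by rewrite -cardT -(bij_eq_card bg) card_ord.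
subst k.
rewrite (@relabel _ _ _ g f bg finj) -minor.
have inC : forall m, m != x -> m \in [set~ x] by move=> m; rewrite !inE.
case: hb => [[m _ [mx mmax]] | [m _ [xm mmin]]].
- have mIn := inC m (negbT (lt_eqF mx)).
  pose r := enum_rank_in mIn m.
  have fr : f (lift 0 r) = m by rewrite fl /r enum_rankK_in.
  apply: (@det_col_beat _ _ r) => i; rewrite !mxE fr f0.
  case: (unliftP 0 i) => [i'|] ->; last by rewrite f0 eqxx lexx (lt_geF mx).
  rewrite fl eq_sym (negbTE (neq_lift _ _)) subr0.
  set y := enum_val i'.
  have [ym|ym] := boolP (y <= m)%O.
    by rewrite (le_trans ym (ltW mx)).
  case: ifP => // yx; exfalso.
  have yltx : (y < x)%O by rewrite lt_neqAle fx yx.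
  by rewrite (mmax y (in_setT _) yltx) in ym.
- have mIn := inC m (negbT (gt_eqF xm)).
  pose r := enum_rank_in mIn m.
  have fr : f (lift 0 r) = m by rewrite fl /r enum_rankK_in.
  apply: (@det_row_beat _ _ r) => j; rewrite !mxE fr f0.
  case: (unliftP 0 j) => [j'|] ->; last by rewrite f0 eqxx lexx (lt_geF xm).
  rewrite fl eq_sym (negbTE (neq_lift _ _)) subr0.
  set y := enum_val j'.
  have [my|my] := boolP (m <= y)%O.
    by rewrite (le_trans (ltW xm) my).
  case: ifP => // xy; exfalso.
  have xlty : (x < y)%O by rewrite lt_neqAle eq_sym fx xy.
  by rewrite (mmin y (in_setT _) xlty) in my.
Qed.
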